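(* For every integer $n\ge1$, $$D(n):=\sum_{\substack{1\le d\le n\\ d\equiv n \bmod 2}} d\binom{n}{\frac{n-d}2}^2=\begin{cases} n\binom{n-1}{\frac{n-1}2}^2 & n\text{ odd},\\[4pt] n\binom{n-1}{\frac n2}^2 & n\text{ even}.\end{cases}$$ *)

(* Defs.v *)
From mathcomp Require Import all_boot.
(* D(n) = sum_{1<=d<=n, d = n mod 2} d * C(n, (n-d)/2)^2, in nat.
   Since d and n have the same parity and d <= n, (n-d)./2 is exact. *)
Definition D (n : nat) : nat :=
  \sum_(1 <= d < n.+1 | odd d == odd n) d * 'C(n, (n - d)./2) ^ 2.

(* Main.v *)
Require Import Defs.
From mathcomp Require Import all_boot.
From mathcomp Require Import zify.

Lemma step n m : 0 < n -> m.+1 * 2 <= n ->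
  n * 'C(n.-1, m.+1) ^ 2 = n * 'C(n.-1, m) ^ 2 + (n - m.+1 * 2) * 'C(n, m.+1) ^ 2.
Proof.
move=> n0 hm.
have h1 := mul_bin_down n m.+1.
have h2 := mul_bin_diag n m.
apply/eqP; rewrite -(eqn_pmul2l n0); apply/eqP.
set c := 'C(n, m.+1) in h1 h2 *.
set a := 'C(n.-1, m.+1) in h1 *.
set b := 'C(n.-1, m) in h2 *.
have e1 : n * (n * a ^ 2) = ((n - m.+1) * c) ^ 2.
  by rewrite -h1 expnMn mulnA mulnn.
have e2 : n * (n * b ^ 2) = (m.+1 * c) ^ 2.
  by rewrite -h2 expnMn mulnA mulnn.
rewrite mulnDr e1 e2 !expnMn.
set k := m.+1 in hm *.
rewrite (mulnA n) -mulnDl; congr (_ * _).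
have [r ->] : exists r, n = k * 2 + r by exists (n - k * 2); rewrite subnKC.
have -> : k * 2 + r - k = k + r by lia.
have -> : k * 2 + r - k * 2 = r by lia.
clear.
rewrite !expnS !expn0 !muln1 !mulnDl !mulnDr.
lia.
Qed.

Lemma sumlem n m : 0 < n -> m * 2 <= n ->
  \sum_(k < m.+1) (n - k * 2) * 'C(n, k) ^ 2 = n * 'C(n.-1, m) ^ 2.
Proof.
move=> n0; elim: m => [|m IH] hm.
  by rewrite big_ord_recr big_ord0 /= !bin0 subn0.
rewrite big_ord_recr /= IH; last by lia.
by rewrite step.
Qed.

Lemma evensum (F : nat -> nat) N :
  \sum_(0 <= j < N) (if ~~ odd j then F j./2 else 0) = \sum_(k < (N.+1)./2) F k.
Proof.
elim: N => [|N IH]; first by rewrite big_geq // big_ord0.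
rewrite big_nat_recr //= IH.
case: (boolP (odd N)) => hN /=.
  by rewrite addn0 uphalf_half hN.
by rewrite uphalf_half (negbTE hN) add0n big_ord_recr.
Qed.

Theorem mainTheorem9 (n : nat) : 1 <= n ->
  D n = (if odd n then n * 'C(n.-1, (n.-1)./2) ^ 2 else n * 'C(n.-1, n./2) ^ 2).
Proof.
move=> n0.
set h := fun d => if odd d == odd n then d * 'C(n, (n - d)./2) ^ 2 else 0.
have -> : D n = \sum_(0 <= d < n.+1) h d.
  by rewrite /D big_mkcond /= [RHS]big_ltn // /h /= mul0n; case: ifP.
rewrite big_nat_rev /=.
rewrite (eq_big_nat _ _ (F2 := fun j => if ~~ odd j then (fun k => (n - k * 2) * 'C(n, k) ^ 2) j./2 else 0)); last first.
  move=> j /andP [_ hj]; rewrite add0n subSS /h oddB; last by lia.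
  rewrite subKn; last by lia.
  case: (boolP (odd j)) => hj2 /=.
    by rewrite addbT; case: (odd n).
  rewrite addbF eqxx -[in n - j](even_halfK hj2) -muln2 //.
rewrite (evensum (fun k => (n - k * 2) * 'C(n, k) ^ 2)) /=.
rewrite sumlem //; last first.
  by rewrite -[n in _ <= n]odd_double_half -muln2 leq_addl.
case: (boolP (odd n)) => hn //.
suff -> : n.-1./2 = n./2 by [].
by rewrite -{1}[n]odd_double_half hn add1n /= doubleK.
Qed.
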